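(* For every $d\in\mathbb N$ and every subset $A\subseteq\mathbb R^d$, one has $\operatorname{ch}A=\operatorname{conv}A$; equivalently, every convex subset of $\mathbb R^d$ is a Choquet set.
   Context: Let $V$ be a Banach space (here $V=\mathbb R^d$) with Borel $\sigma$-algebra $\mathcal B(V)$ and dual $V^*$. A Borel probability measure $\mu$ on $V$ has a barycenter if there is $y\in V$ with $L(y)=\int_V L(x)\,\mu(dx)$ for all $L\in V^*$; this $y$ is unique and is denoted $r(\mu)=\int_V x\,\mu(dx)$. For a Borel set $A\subseteq V$, $\mathcal M(A)$ is the set of regular Borel probability measures $\mu$ on $V$ with $\mu(A)=1$ that have a barycenter; for an arbitrary $A\subseteq V$, $\mathcal M(A)=\bigcup\{\mathcal M(B): B\subseteq A,\ B\in\mathcal B(V)\}$. A point $r(\mu)$ with $\mu\in\mathcal M(A)$ is a Choquet combination of points of $A$. $A$ is a Choquet set if $r(\mu)\in A$ for every $\mu\in\mathcal M(A)$. The Choquet hull $\operatorname{ch}A$ is the intersection of all Choquet sets containing $A$ (the smallest Choquet set containing $A$). *)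

(* Defs.v *)
From HB Require Import structures.
From mathcomp Require Import all_boot all_order all_algebra.
From mathcomp Require Import all_classical all_reals all_analysis.
Set Implicit Arguments. Unset Strict Implicit. Unset Printing Implicit Defensive.
Import Order.TTheory GRing.Theory Num.Theory.
Import numFieldNormedType.Exports.
Local Open Scope classical_set_scope.
Local Open Scope ring_scope.

Section Choquet.
Variables (R : realType) (d : nat).

Local Notation V := 'rV[R]_d.

Definition borelV : Type := g_sigma_algebraType (@open V).

Definition dual_elt (L : V -> R) : Prop :=
  (forall (a : R) (x y : V), L (a *: x + y) = a * L x + L y) /\ continuous L.

Definition is_barycenter (mu : probability borelV R) (y : V) : Prop :=
  forall L : V -> R, dual_elt L ->
    mu.-integrable setT (fun x : borelV => (L x)%:E) /\
    (\int[mu]_x (L x)%:E = (L y)%:E)%E.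

Definition has_barycenter (mu : probability borelV R) : Prop :=
  exists y, is_barycenter mu y.

Definition regular_measure (mu : probability borelV R) : Prop :=
  forall B : set borelV, measurable B ->
    mu B = ereal_sup [set mu K | K in [set K : set V | compact K /\ K `<=` B]] /\
    mu B = ereal_inf [set mu U | U in [set U : set V | open U /\ B `<=` U]].

(* mu \in M(A), for an arbitrary A : union over Borel B \subseteq A of M(B) *)
Definition in_M (A : set V) (mu : probability borelV R) : Prop :=
  exists B : set borelV, [/\ measurable B, B `<=` A & mu B = 1%E]
  /\ regular_measure mu /\ has_barycenter mu.

Definition choquet_set (A : set V) : Prop :=
  forall (mu : probability borelV R) (y : V),
    in_M A mu -> is_barycenter mu y -> A y.

Definition choquet_hull (A : set V) : set V :=
  [set x | forall C : set V, choquet_set C -> A `<=` C -> C x].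

Definition convex (C : set V) : Prop :=
  forall (x y : V) (t : R), C x -> C y -> 0 <= t <= 1 ->
    C (t *: x + (1 - t) *: y).

Definition conv_hull (A : set V) : set V :=
  [set x | forall C : set V, convex C -> A `<=` C -> C x].

End Choquet.

(* Main.v *)
Require Import Defs.
From HB Require Import structures.
From mathcomp Require Import all_boot all_order all_algebra.
From mathcomp Require Import all_classical all_reals all_analysis.
From mathcomp Require Import zify ring lra.
Set Implicit Arguments. Unset Strict Implicit. Unset Printing Implicit Defensive.
Import Order.TTheory GRing.Theory Num.Theory.
Import numFieldNormedType.Exports.
Import measurable_realfun.
Local Open Scope classical_set_scope.
Local Open Scope ring_scope.

Definition dotv (R : realType) n (l x : 'rV[R]_n) : R := \sum_i l 0 i * x 0 i.

Section Sep.
Variable R : realType.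



Lemma dotvDr n (l x y : 'rV[R]_n) : dotv l (x + y) = dotv l x + dotv l y.
Proof. by rewrite /dotv -big_split /=; apply: eq_bigr => i _; rewrite mxE mulrDr. Qed.
Lemma dotvZr n (l x : 'rV[R]_n) a : dotv l (a *: x) = a * dotv l x.
Proof. by rewrite /dotv mulr_sumr; apply: eq_bigr => i _; rewrite mxE mulrCA. Qed.
Lemma dotvBr n (l x y : 'rV[R]_n) : dotv l (x - y) = dotv l x - dotv l y.
Proof. by rewrite /dotv -sumrB; apply: eq_bigr => i _; rewrite !mxE mulrBr. Qed.
Lemma dotvDl n (l m x : 'rV[R]_n) : dotv (l + m) x = dotv l x + dotv m x.
Proof. by rewrite /dotv -big_split /=; apply: eq_bigr => i _; rewrite mxE mulrDl. Qed.
Lemma dotvZl n (l x : 'rV[R]_n) a : dotv (a *: l) x = a * dotv l x.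
Proof. by rewrite /dotv mulr_sumr; apply: eq_bigr => i _; rewrite mxE mulrA. Qed.
Lemma dotv0l n (x : 'rV[R]_n) : dotv 0 x = 0.
Proof. by rewrite /dotv big1 // => i _; rewrite mxE mul0r. Qed.
Lemma dotv_delta n (j : 'I_n) (x : 'rV[R]_n) : dotv (delta_mx 0 j) x = x 0 j.
Proof.
rewrite /dotv (bigD1 j) //= big1 ?addr0 => [|i /negbTE ij].
  by rewrite mxE !eqxx mul1r.
by rewrite mxE ij andbF mul0r.
Qed.

Definition cone_like n (K : set 'rV[R]_n) :=
  [/\ forall u v, K u -> K v -> K (u + v),
      forall t u, 0 < t -> K u -> K (t *: u) & ~ K 0].

Lemma sep_ind n (j : nat) : forall K : set 'rV[R]_n, cone_like K ->
  (forall u, K u -> forall i : 'I_n, (j <= i)%N -> u 0 i = 0) ->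
  forall k0, K k0 ->
  exists l, (forall u, K u -> 0 <= dotv l u) /\ exists2 k, K k & 0 < dotv l k.
Proof.
elim: j => [|j IH] K [Kadd Kscal K0] Ksub k0 Kk0.
  exfalso; apply: K0; suff <- : k0 = 0 by [].
  by apply/matrixP => a b; rewrite (ord1 a) mxE; exact: Ksub.
have [jn|nj] := ltnP j n; last first.
  apply: (IH K _ _ k0 Kk0); first by split.
  by move=> u Ku i ji; exfalso; move: (ltn_ord i); lia.
pose jj := Ordinal jn.
pose f (u : 'rV[R]_n) := u 0 jj.
have fD u v : f (u + v) = f u + f v by rewrite /f mxE.
have fZ t u : f (t *: u) = t * f u by rewrite /f mxE.
pose K' := [set u | K u /\ f u = 0].
have K'cone : cone_like K'.
  split.
  - move=> u v [Ku fu] [Kv fv]; split; [exact: Kadd | by rewrite fD fu fv addr0].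
  - move=> t u t0 [Ku fu]; split; [exact: Kscal | by rewrite fZ fu mulr0].
  - by case.
have K'sub : forall u, K' u -> forall i : 'I_n, (j <= i)%N -> u 0 i = 0.
  move=> u [Ku fu] i ji; have [eij|nij] := eqVneq (nat_of_ord i) j.
    by have -> : i = jj by apply/val_inj.
  by apply: Ksub => //; move/eqP: nij; lia.
have IH' := IH K' K'cone K'sub.
have dotvE (l0 : 'rV[R]_n) a x : dotv (l0 + a *: delta_mx 0 jj) x = dotv l0 x + a * f x.
  by rewrite dotvDl dotvZl dotv_delta.
have [[u [Ku fu]]|hu] := pselect (exists u, K u /\ 0 < f u);
have [[v [Kv fv]]|hv] := pselect (exists v, K v /\ f v < 0).
- have Kw : K' (f u *: v + (- f v) *: u).
    split; first by apply: Kadd; apply: Kscal => //; rewrite oppr_gt0.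
    by rewrite fD !fZ; ring.
  have [l0 [l0ge [k Kk l0k]]] := IH' _ Kw.
  have key u' v' : K u' -> 0 < f u' -> K v' -> f v' < 0 ->
      - (dotv l0 u' / f u') <= dotv l0 v' / (- f v').
    move=> Ku' fu' Kv' fv'.
    have Kw' : K' ((f u')^-1 *: u' + (- f v')^-1 *: v').
      split.
        by apply: Kadd; apply: Kscal => //; rewrite invr_gt0 // oppr_gt0.
      rewrite fD !fZ mulVf ?gt_eqF // invrN mulNr mulVf ?lt_eqF //; ring.
    have := l0ge _ Kw'; rewrite dotvDr !dotvZr => h.
    rewrite -subr_ge0 opprK [_ / f u']mulrC [_ / - f v']mulrC.
    by rewrite addrC.
  pose S := [set r | exists u', [/\ K u', 0 < f u' & r = - (dotv l0 u' / f u')]].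
  have Sne : S !=set0 by exists (- (dotv l0 u / f u)); exists u.
  have Sub : ubound S (dotv l0 v / (- f v)).
    by move=> r [u' [Ku' fu' ->]]; apply: key.
  have hS : has_sup S by split => //; exists (dotv l0 v / (- f v)).
  exists (l0 + sup S *: delta_mx 0 jj); split; last first.
    by exists k; [case: Kk | rewrite dotvE; case: Kk => _ ->; rewrite mulr0 addr0].
  move=> x Kx; rewrite dotvE.
  have [fx|fx|fx] := ltgtP (f x) 0.
  + have : sup S <= dotv l0 x / (- f x).
      by apply: ge_sup => // r [u' [Ku' fu' ->]]; apply: key.
    rewrite ler_pdivlMr ?oppr_gt0 // => h; lra.
  + have : - (dotv l0 x / f x) <= sup S by apply: sup_upper_bound => //; exists x.
    rewrite -mulNr ler_pdivrMr // => h; lra.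
  + by rewrite fx mulr0 addr0; apply: l0ge.
- exists (delta_mx 0 jj); split; last by exists u => //; rewrite dotv_delta.
  move=> x Kx; rewrite dotv_delta; rewrite leNgt; apply/negP => fx.
  by apply: hv; exists x; split.
- exists ((-1) *: delta_mx 0 jj); split; last first.
    by exists v => //; rewrite dotvZl dotv_delta mulN1r oppr_gt0.
  move=> x Kx; rewrite dotvZl dotv_delta mulN1r oppr_ge0 leNgt; apply/negP => fx.
  by apply: hu; exists x; split.
- have K'K x : K x -> K' x.
    move=> Kx; split => //; have [fx|fx|//] := ltgtP (f x) 0.
      by exfalso; apply: hv; exists x.
    by exfalso; apply: hu; exists x.
  have [l0 [l0ge [k [Kk _] l0k]]] := IH' _ (K'K _ Kk0).
  exists l0; split => //; first by move=> x /K'K; exact: l0ge.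
  by exists k.
Qed.

Lemma sep n (K : set 'rV[R]_n) k0 : cone_like K -> K k0 ->
  exists l, (forall u, K u -> 0 <= dotv l u) /\ exists2 k, K k & 0 < dotv l k.
Proof.
move=> Kc Kk0; apply: (@sep_ind n n K Kc _ k0 Kk0) => u _ i ni.
by exfalso; move: (ltn_ord i); lia.
Qed.

End Sep.

Section B.
Variables (R : realType) (d : nat).
Local Notation V := 'rV[R]_d.

Lemma dotv_cont (l : V) : continuous (dotv l).
Proof.
rewrite /dotv; elim: (index_enum _) => [|i r IH].
  by under eq_fun do rewrite big_nil; exact: cst_continuous.
under eq_fun do rewrite big_cons /=.
have h1 : continuous (fun z : V => l 0 i * z 0 i).
  move=> z; exact: (continuousM (@cst_continuous _ _ (l 0 i) z) (@coord_continuous _ _ _ 0 i z)).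
move=> x; exact: (continuousD (h1 x) (IH x)).
Qed.

Lemma cont_measurable (L : V -> R) : continuous L ->
  measurable_fun [set: borelV R d] (L : borelV R d -> R).
Proof.
move=> /continuousP cL.
have h := measurable_realfun.RGenOpens.measurableE R.
apply: (measurability _ h).
move=> _ [_ [a [b ->] <-]]; rewrite setTI; apply: sub_sigma_algebra.
by apply: cL; exact: interval_open.
Qed.


End B.

Section Main.
Variables (R : realType) (d : nat).
Local Notation V := 'rV[R]_d.
Variables (mu : probability (borelV R d) R) (y : V) (bary : is_barycenter mu y).

Lemma dual_dotv (l : V) : dual_elt (dotv l).
Proof. by split; [move=> a x z; rewrite dotvDr dotvZr | exact: dotv_cont]. Qed.

Lemma key_step (B : set (borelV R d)) (l : V) : measurable B -> mu B = 1%E ->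
  (forall x, B x -> dotv l y <= dotv l x) ->
  measurable (B `&` [set x | dotv l x = dotv l y]) /\
  mu (B `&` [set x | dotv l x = dotv l y]) = 1%E.
Proof.
move=> mB muB hB.
have [intL intE] := bary (dual_dotv l).
have mL : measurable_fun [set: borelV R d] (dotv l) := cont_measurable (@dotv_cont R d l).
set L := dotv l in intL intE hB mL *.
have mS : measurable [set x : borelV R d | L x = L y].
  by have := mL measurableT _ (measurable_set1 (L y)); rewrite setTI.
split; first exact: measurableI.
have muC : mu (~` B) = 0%E by rewrite probability_setC // muB subee.
have intB : mu.-integrable B (EFin \o L) := integrableS measurableT mB (@subsetT _ _) intL.
have i1 : (\int[mu]_(x in B) (L x)%:E = (L y)%:E)%E.
  rewrite -intE (negligible_integral (measurableC mB) measurableT intL muC).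
  by rewrite setTD setCK.
pose f : borelV R d -> \bar R := fun x => (L x - L y)%:E.
have i2 : (\int[mu]_(x in B) f x = 0)%E.
  rewrite /f; under eq_integral do rewrite EFinB.
  rewrite (integralB_EFin mB intB (finite_measure_integrable_cst _ (L y) mB)) i1.
  rewrite (_ : (\int[mu]_(x in B) (cst (L y) x)%:E = \int[mu]_(x in B) cst (L y)%:E x)%E) //.
  rewrite integral_cst //; transitivity ((L y)%:E - (L y)%:E * 1)%E; first by repeat f_equal; exact: muB.
  by rewrite mule1 subee.
have mf : measurable_fun B f.
  apply/measurable_EFinP.
  have -> : (fun x => L x - L y) = L \+ cst (- L y) by [].
  apply: measurable_funD; last exact: measurable_cst.
  exact: measurable_funS measurableT (@subsetT _ _) mL.
have i3 : (\int[mu]_(x in B) `|f x| = 0)%E.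
  rewrite -i2; apply: eq_integral => x /[!inE] Bx; apply: gee0_abs.
  by rewrite lee_fin subr_ge0; exact: hB.
have [N [mN muN sN]] := (ae_eq_integral_abs mu mB mf).1 i3.
have hD : mu (B `\` [set x | L x = L y]) = 0%E.
  apply: (subset_measure0 _ mN _ muN); first exact: measurableD.
  move=> x [Bx nx]; apply: sN => /= h; apply: nx.
  have := h Bx; rewrite /f => -[]; move/eqP; rewrite subr_eq0 => /eqP.
  done.
have h : mu B = (mu (B `\` [set x | L x = L y]) + mu (B `&` [set x | L x = L y]))%E.
  exact: (measureDI mu mB mS).
by rewrite hD add0e muB in h.
Qed.

Lemma main_ind k : forall (M : 'M[R]_d) (C : set V) (B : set (borelV R d)),
  (d - \rank M < k)%N -> convex C -> measurable B -> B `<=` C -> mu B = 1%E ->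
  (forall x v, C x -> (v <= M)%MS -> dotv v (x - y) = 0) -> C y.
Proof.
elim: k => [|k IH] M C B hk Cc mB BC muB hM; first by [].
have [//|nCy] := pselect (C y).
have [b Bb] : B !=set0.
  apply/set0P/negP => /eqP B0; move: muB; rewrite B0 measure0 => /esym/eqP.
  by rewrite onee_eq0.
pose K := [set u : V | exists t x, [/\ 0 < t, C x & u = t *: (x - y)]].
have Kc : cone_like K.
  split.
  - move=> _ _ [t [x [t0 Cx ->]]] [s [z [s0 Cz ->]]].
    have ts0 : 0 < t + s by rewrite addr_gt0.
    exists (t + s), ((t / (t + s)) *: x + (1 - t / (t + s)) *: z); split => //.
    + apply: Cc => //; rewrite divr_ge0 ?ltW //=. by rewrite ltr_pdivrMr // mul1r ltrDl.
    + apply/matrixP => a c; rewrite !mxE; field; exact: lt0r_neq0.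
  - move=> t _ t0 [s [x [s0 Cx ->]]]; exists (t * s), x; split => //.
      exact: mulr_gt0.
    by rewrite scalerA.
  - move=> [t [x [t0 Cx /esym/eqP]]]; rewrite scaler_eq0 (gt_eqF t0) /= subr_eq0.
    by move=> /eqP xy; apply: nCy; rewrite -xy.
have Kb : K (b - y) by exists 1, b; split => //; [exact: BC | rewrite scale1r].
have [l [lge [_ [t [x [t0 Cx ->]]] lpos]]] := sep Kc Kb.
have hC z : C z -> dotv l y <= dotv l z.
  move=> Cz; have : K (z - y) by exists 1, z; split => //; rewrite scale1r.
  by move/lge; rewrite dotvBr subr_ge0.
have lx : 0 < dotv l (x - y) by move: lpos; rewrite dotvZr pmulr_rgt0.
have nlM : ~~ (l <= M)%MS.
  by apply/negP => lM; move: lx; rewrite (hM x l Cx lM) ltxx.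
pose M' := (M + l)%MS.
have rk : (\rank M < \rank M')%N.
  apply: rank_ltmx; rewrite ltmxE addsmxSl /=; apply: contra nlM => h.
  exact: submx_trans (addsmxSr M l) h.
have rk' : (\rank M' <= d)%N by exact: rank_leq_col.
have [mB' muB'] := key_step mB muB (fun z Bz => hC z (BC z Bz)).
suff [] : (C `&` [set z | dotv l z = dotv l y]) y by [].
apply: (IH M' (C `&` [set z | dotv l z = dotv l y]) (B `&` [set z | dotv l z = dotv l y])).
- by move: hk rk rk'; lia.
- move=> a c s [Ca ea] [Cb eb] hs; split; first exact: Cc.
  by rewrite /= dotvDr !dotvZr ea eb; ring.
- exact: mB'.
- by move=> z [Bz ez]; split => //; exact: BC.
- exact: muB'.
- move=> z v [Cz ez] /sub_addsmxP [[u1 u2] /= ->].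
  rewrite dotvDl (hM z (u1 *m M) Cz (submxMl _ _)) add0r.
  by rewrite (mx11_scalar u2) mul_scalar_mx dotvZl dotvBr ez subrr mulr0.
Qed.

Lemma convex_bary (C : set V) : convex C -> in_M C mu -> C y.
Proof.
move=> Cc [B [[mB BC muB] _]].
apply: (@main_ind d.+1 0 C B _ Cc mB BC muB).
  by rewrite mxrank0 subn0.
by move=> x v _; rewrite submx0 => /eqP ->; rewrite dotv0l.
Qed.

End Main.

Section TwoPt.
Variables (R : realType) (d : nat).
Local Notation T := (borelV R d).
Variables (x z : T) (t : R) (t0 : 0 <= t) (t0' : 0 <= 1 - t).

Definition tpm : set T -> \bar R :=
  measure_add (mscale (NngNum t0) (\d_x)) (mscale (NngNum t0') (\d_z)).

Let tpm0 : tpm set0 = 0%E. Proof. by rewrite /tpm; exact: measure0. Qed.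
Let tpm_ge0 A : (0 <= tpm A)%E. Proof. by rewrite /tpm; exact: measure_ge0. Qed.
Let tpm_sa : semi_sigma_additive tpm.
Proof. by rewrite /tpm; exact: measure_semi_sigma_additive. Qed.
HB.instance Definition _ := isMeasure.Build _ _ _ tpm tpm0 tpm_ge0 tpm_sa.

Lemma tpmE A : tpm A = (t * (x \in A)%:R + (1 - t) * (z \in A)%:R)%:E.
Proof.
rewrite /tpm measure_addE.
transitivity ((t%:E * (\d_x A : \bar R)) + ((1 - t)%:E * (\d_z A : \bar R)))%E; first by [].
by rewrite !diracE -!EFinM -EFinD.
Qed.

Let tpm_setT : tpm setT = 1%E.
Proof. by rewrite tpmE !in_setT /= !mulr1 subrKC. Qed.
HB.instance Definition _ := Measure_isProbability.Build _ _ _ tpm tpm_setT.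

Lemma tpmP A : (tpm : probability T R) A = (t * (x \in A)%:R + (1 - t) * (z \in A)%:R)%:E.
Proof. exact: tpmE. Qed.

Lemma tpm_int_ge0 (g : T -> R) : measurable_fun setT g -> (forall w, 0 <= g w) ->
  (\int[tpm]_w (g w)%:E = (t * g x + (1 - t) * g z)%:E)%E.
Proof.
move=> mg g0.
have mEg : measurable_fun setT (fun w => (g w)%:E) by apply/measurable_EFinP.
rewrite /tpm ge0_integral_measure_add //; last by move=> w _; rewrite lee_fin.
rewrite !ge0_integral_mscale //; try by move=> w _; rewrite lee_fin.
rewrite !integral_dirac // !diracE !in_setT /= !mul1e.
by rewrite -!EFinM -EFinD.
Qed.

Lemma tpm_bary : is_barycenter tpm (t *: (x : 'rV[R]_d) + (1 - t) *: z).
Proof.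
move=> L [Llin Lc].
have L0 : L 0 = 0.
  have := Llin 1 0 0; rewrite scale1r addr0 mul1r.
  by move/(congr1 (fun u => u - L 0)); rewrite subrr addrK.
have LZ a w : L (a *: w) = a * L w by have := Llin a w 0; rewrite addr0 L0 addr0.
have Ly : L (t *: (x : 'rV[R]_d) + (1 - t) *: z) = t * L x + (1 - t) * L z.
  by rewrite Llin LZ.
have mL : measurable_fun setT (L : T -> R) := cont_measurable Lc.
split.
  apply/integrableP; split; first exact/measurable_EFinP.
  under eq_integral => w _ do rewrite abse_EFin.
  rewrite tpm_int_ge0 //; first exact: ltry.
  exact: measurableT_comp (@normr_measurable _ _) mL.
rewrite integralE.
rewrite (_ : (fun w => (L w)%:E) = EFin \o L) // funerpos funerneg.
rewrite (tpm_int_ge0 (measurable_funrpos mL) (funrpos_ge0 L)).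
rewrite (tpm_int_ge0 (measurable_funrneg mL) (funrneg_ge0 L)).
rewrite -EFinB Ly; congr EFin.
have hp w : L w = L^\+ w - L^\- w by rewrite -[in LHS](funrposBneg L).
by rewrite (hp x) (hp z); ring.
Qed.

Lemma ind_le (a : T) (K B : set T) : K `<=` B -> ((a \in K)%:R <= (a \in B)%:R :> R).
Proof.
move=> KB; have [aK|aK] := boolP (a \in K).
  by rewrite (mem_set (KB _ (set_mem aK))).
by rewrite ler0n.
Qed.

Lemma tpm_regular : regular_measure tpm.
Proof.
move=> B mB; split.
- pose K0 := B `&` [set x; z].
  have cK0 : compact (K0 : set 'rV[R]_d).
    exact: finite_compact (sub_finite_set (@subIsetr _ _ _) (finite_set2 x z)).
  apply/eqP; rewrite eq_le; apply/andP; split.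
  + apply: ereal_sup_ubound; exists K0; first by split => //; exact: subIsetl.
    by rewrite !tpmP !in_setI !in_setU !in_set1 !eqxx orbT orTb !andbT.
  + apply: ge_ereal_sup => _ [K [cK KB] <-].
    rewrite !tpmP lee_fin; apply: lerD; apply: ler_wpM2l => //; exact: ind_le.
- pose U0 := ~` (~` B `&` [set x; z]).
  have oU0 : open (U0 : set 'rV[R]_d).
    apply: closed_openC; apply: compact_closed; first exact: norm_hausdorff.
    exact: finite_compact (sub_finite_set (@subIsetr _ _ _) (finite_set2 x z)).
  have BU0 : B `<=` U0 by move=> w Bw [nBw _]; exact: nBw.
  apply/eqP; rewrite eq_le; apply/andP; split.
  + apply/ereal_infP => _ [U [oU BU] <-].
    rewrite !tpmP lee_fin; apply: lerD; apply: ler_wpM2l => //; exact: ind_le.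
  + apply: ge_ereal_inf; exists (tpm U0); first by exists U0.
    rewrite !tpmP !in_setC !in_setI !in_setC !in_setU !in_set1 !eqxx orbT orTb.
    by rewrite !andbT !negbK.
Qed.

End TwoPt.

Lemma choquet_convex (R : realType) (d : nat) (C : set 'rV[R]_d) :
  choquet_set C -> convex C.
Proof.
move=> hC a b s Ca Cb /andP [s0 s1].
have s0' : 0 <= 1 - s by rewrite subr_ge0.
apply: (hC (tpm (a : borelV R d) b s0 s0')); last exact: tpm_bary.
exists [set (a : borelV R d); b]; split; last first.
  split; first exact: tpm_regular.
  by exists (s *: a + (1 - s) *: b); exact: tpm_bary.
split.
- rewrite -[X in measurable X]setCK; apply: measurableC; apply: sub_sigma_algebra.
  apply: closed_openC; apply: compact_closed; first exact: norm_hausdorff.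
  exact: finite_compact (finite_set2 _ _).
- by move=> w [->|->].
- by rewrite tpmP !in_setU !in_set1 !eqxx orbT orTb /= !mulr1 subrKC.
Qed.


Theorem mainTheorem3 (R : realType) (d : nat) :
  (forall A : set 'rV[R]_d, choquet_hull A = conv_hull A) /\
  (forall C : set 'rV[R]_d, convex C -> choquet_set C).
Proof.
have cc : forall C : set 'rV[R]_d, convex C -> choquet_set C.
  move=> C Cc mu y hM hb; exact: (convex_bary hb Cc hM).
split => // A; apply/seteqP; split => w hw.
- by move=> C Cc AC; apply: hw => //; exact: cc.
- by move=> C Cch AC; apply: hw => //; exact: choquet_convex.
Qed.
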